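(* Let $(X,\rho_X)$ be a symmetric rack, $\mathcal F=(A,\phi,\psi,\eta)$ a constant-coefficient $(X,\rho_X)$-module, $\alpha\in Z^2_{SR}((X,\rho_X);A)$, and $E(\mathcal F,\alpha)$ the abelian extension of $(X,\rho_X)$ by $\mathcal F$ through $\alpha$. Then there is an exact sequence of groups $$0\to Z^1_{SR}((X,\rho_X);A)\xrightarrow{\ \iota\ }\operatorname{Aut}_A\big(E(\mathcal F,\alpha),\rho_{E(\mathcal F,\alpha)}\big)\xrightarrow{\ \Gamma\ }\operatorname{Aut}(X,\rho_X)\times\operatorname{Aut}(A)\xrightarrow{\ \Lambda_{[\alpha]}\ }H^2_{SR}((X,\rho_X);A),$$ where $\iota(\lambda)$ is the map $(x,s)\mapsto(x,\lambda(x)+s)$. That is: $\iota$ is an injective group homomorphism with image $\operatorname{Ker}(\Gamma)$, $\Gamma$ is a group homomorphism, and (with $\Lambda_{[\alpha]}$ merely a set map) $\operatorname{Im}(\Gamma)=\Lambda_{[\alpha]}^{-1}(0)$, where $0$ is the identity of $H^2_{SR}((X,\rho_X);A)$.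
   Context: A rack is a set $X$ with binary operation $*$ such that each $x\mapsto x*y$ is bijective (inverse $x\mapsto x*^{-1}y$) and $(x*y)*z=(x*z)*(y*z)$. A symmetric rack $(X,\rho_X)$ is a rack with $\rho_X:X\to X$ such that $\rho_X^2=\mathrm{id}$, $\rho_X(x*y)=\rho_X(x)*y$, $x*\rho_X(y)=x*^{-1}y$. $\operatorname{Aut}(X,\rho_X)$: bijections preserving $*$ and commuting with $\rho_X$. A constant-coefficient $(X,\rho_X)$-module $\mathcal F=(A,\phi,\psi,\eta)$: an abelian group $A$ with group automorphism $\phi$ and endomorphisms $\psi,\eta$ satisfying $\phi\psi=\psi\phi$, $\eta^2=\mathrm{id}$, $\eta\phi=\phi\eta$, $\eta\psi=\psi$, $\phi^2=\mathrm{id}$, $\psi=\phi\psi+\psi^2$, $\phi\psi\eta=-\psi$ (the module axioms with $A_x=A$, $\phi_{x,y}=\phi$, $\psi_{x,y}=\psi$, $\eta_x=\eta$). $\operatorname{Aut}(A)$: group automorphisms of $A$ commuting with $\phi,\psi,\eta$. Cohomology (all groups under pointwise addition): $Z^1_{SR}((X,\rho_X);A)=\{\lambda:X\to A\mid \phi\lambda(x)-\lambda(x*y)+\psi\lambda(y)=0,\ \eta\lambda(z)=\lambda(\rho_X(z))\ \forall x,y,z\}$. $Z^2_{SR}((X,\rho_X);A)$: maps $\sigma:X\times X\to A$ with, for all $x,y,z$: $-\phi\sigma(x,z)+\phi\sigma(x,y)+\sigma(x*y,z)-\sigma(x*z,y*z)-\psi\sigma(y,z)=0$, $\eta\sigma(x,y)=\sigma(\rho_X(x),y)$,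 $\phi\sigma(x*y,\rho_X(y))+\sigma(x,y)=0$. $B^2_{SR}$: maps $(x,y)\mapsto\phi\lambda(x)-\lambda(x*y)+\psi\lambda(y)$ with $\lambda:X\to A$ satisfying $\eta\lambda(x)=\lambda(\rho_X(x))$. $H^2_{SR}=Z^2_{SR}/B^2_{SR}$. Action: for $(\zeta,\theta)\in\operatorname{Aut}(X,\rho_X)\times\operatorname{Aut}(A)$, ${}^{(\zeta,\theta)}\sigma(x,y)=\theta(\sigma(\zeta^{-1}(x),\zeta^{-1}(y)))$ and ${}^{(\zeta,\theta)}[\sigma]=[{}^{(\zeta,\theta)}\sigma]$. $\Lambda_{[\alpha]}(\zeta,\theta)=[\alpha]-{}^{(\zeta,\theta)}[\alpha]$. $E(\mathcal F,\alpha)$ is the symmetric rack on $X\times A$ with $(x,a)*(y,b)=(x*y,\phi(a)+\psi(b)+\alpha(x,y))$ and $\rho_{E(\mathcal F,\alpha)}(x,a)=(\rho_X(x),\eta(a))$. $\operatorname{Aut}_A(E(\mathcal F,\alpha),\rho_{E(\mathcal F,\alpha)})$ is the group of symmetric rack automorphisms $\xi$ of $E(\mathcal F,\alpha)$ of the form $\xi(x,s)=(\zeta(x),\lambda(x)+\theta(s))$ for some $(\zeta,\theta)\in\operatorname{Aut}(X,\rho_X)\times\operatorname{Aut}(A)$ and some map $\lambda:X\to A$; $\Gamma(\xi)=(\zeta,\theta)$. *)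

(* Defs.v *)
From mathcomp Require Import all_boot all_algebra.
Set Implicit Arguments.
Unset Strict Implicit.
Unset Printing Implicit Defensive.
Import GRing.Theory.
Local Open Scope ring_scope.

Section SymRack.
Variables (X : Type) (op : X -> X -> X) (rho : X -> X).

Definition is_rack : Prop :=
  (forall y, bijective (fun x => op x y)) /\
  (forall x y z, op (op x y) z = op (op x z) (op y z)).

(* symmetric rack: rho involutive, rho(x*y) = rho(x)*y, and
   x * rho(y) = x *^{-1} y, i.e. (x * rho y) * y = x
   (x *^{-1} y is the unique w with w * y = x). *)
Definition is_symmetric_rack : Prop :=
  is_rack /\
  (forall x, rho (rho x) = x) /\
  (forall x y, rho (op x y) = op (rho x) y) /\
  (forall x y, op (op x (rho y)) y = x).

Definition in_AutX (zeta : X -> X) : Prop :=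
  bijective zeta /\
  (forall x y, zeta (op x y) = op (zeta x) (zeta y)) /\
  (forall x, zeta (rho x) = rho (zeta x)).
End SymRack.

Section Module.
Variables (A : zmodType) (phi psi eta : A -> A).

Definition is_zhom (f : A -> A) : Prop := forall a b, f (a + b) = f a + f b.

Definition is_cc_module : Prop :=
  is_zhom phi /\ bijective phi /\ is_zhom psi /\ is_zhom eta /\
  (forall a, phi (psi a) = psi (phi a)) /\
  (forall a, eta (eta a) = a) /\
  (forall a, eta (phi a) = phi (eta a)) /\
  (forall a, eta (psi a) = psi a) /\
  (forall a, phi (phi a) = a) /\
  (forall a, psi a = phi (psi a) + psi (psi a)) /\
  (forall a, phi (psi (eta a)) = - psi a).

Definition in_AutA (theta : A -> A) : Prop :=
  is_zhom theta /\ bijective theta /\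
  (forall a, theta (phi a) = phi (theta a)) /\
  (forall a, theta (psi a) = psi (theta a)) /\
  (forall a, theta (eta a) = eta (theta a)).

Variables (X : Type) (op : X -> X -> X) (rho : X -> X).

Definition in_Z1 (lam : X -> A) : Prop :=
  (forall x y, phi (lam x) - lam (op x y) + psi (lam y) = 0) /\
  (forall z, eta (lam z) = lam (rho z)).

Definition in_Z2 (sigma : X -> X -> A) : Prop :=
  (forall x y z, - phi (sigma x z) + phi (sigma x y) + sigma (op x y) z
                 - sigma (op x z) (op y z) - psi (sigma y z) = 0) /\
  (forall x y, eta (sigma x y) = sigma (rho x) y) /\
  (forall x y, phi (sigma (op x y) (rho y)) + sigma x y = 0).

Definition in_B2 (sigma : X -> X -> A) : Prop :=
  exists lam : X -> A, (forall x, eta (lam x) = lam (rho x)) /\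
    (forall x y, sigma x y = phi (lam x) - lam (op x y) + psi (lam y)).

(* the action  (zeta,theta).sigma (x,y) = theta (sigma (zeta^-1 x, zeta^-1 y)),
   with zinv the inverse of zeta *)
Definition act2 (zinv : X -> X) (theta : A -> A) (sigma : X -> X -> A) :=
  fun x y => theta (sigma (zinv x) (zinv y)).

(* Lambda_[alpha](zeta,theta) = [alpha] - (zeta,theta).[alpha] is 0 in H^2_SR,
   i.e. alpha - (zeta,theta).alpha lies in B^2_SR. *)
Definition Lambda_zero (alpha : X -> X -> A) (zeta : X -> X) (theta : A -> A)
  : Prop :=
  exists zinv : X -> X, cancel zeta zinv /\ cancel zinv zeta /\
    in_B2 (fun x y => alpha x y - act2 zinv theta alpha x y).

Definition opE (alpha : X -> X -> A) (p q : X * A) : X * A :=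
  (op p.1 q.1, phi p.2 + psi q.2 + alpha p.1 q.1).
Definition rhoE (p : X * A) : X * A := (rho p.1, eta p.2).

Definition in_AutE (alpha : X -> X -> A) (xi : X * A -> X * A) : Prop :=
  bijective xi /\
  (forall p q, xi (opE alpha p q) = opE alpha (xi p) (xi q)) /\
  (forall p, xi (rhoE p) = rhoE (xi p)).

(* xi has the form (x,s) |-> (zeta x, lam x + theta s) with
   (zeta,theta) in Aut(X,rho_X) x Aut(A); i.e. Gamma(xi) = (zeta,theta). *)
Definition Gamma_rel (xi : X * A -> X * A) (zeta : X -> X) (theta : A -> A)
  : Prop :=
  in_AutX op rho zeta /\ in_AutA theta /\
  exists lam : X -> A, forall x s, xi (x, s) = (zeta x, lam x + theta s).

Definition in_AutA_E (alpha : X -> X -> A) (xi : X * A -> X * A) : Prop :=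
  in_AutE alpha xi /\ exists zeta theta, Gamma_rel xi zeta theta.

Definition iota_map (lam : X -> A) : X * A -> X * A :=
  fun p => (p.1, lam p.1 + p.2).
End Module.

(* Main.v *)
Require Import Defs.
From mathcomp Require Import all_boot all_algebra ssrAC.
From Stdlib Require Import FunctionalExtensionality.
Import GRing.Theory.
Local Open Scope ring_scope.

Section Aux.
Variable A : zmodType.
Lemma zh0 (f : A -> A) : is_zhom f -> f 0 = 0.
Proof.
move=> H; have h := H 0 0; rewrite addr0 in h.
by apply: (addrI (f 0)); rewrite -h addr0.
Qed.
Lemma zhN (f : A -> A) : is_zhom f -> forall a, f (- a) = - f a.
Proof.
move=> H a; apply: (addrI (f a)); by rewrite -H !subrr zh0.
Qed.
End Aux.

Theorem theorem6p7
  (X : Type) (op : X -> X -> X) (rho : X -> X)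
  (A : zmodType) (phi psi eta : A -> A) (alpha : X -> X -> A)
  (HX : is_symmetric_rack op rho)
  (HF : is_cc_module phi psi eta)
  (Halpha : in_Z2 phi psi eta op rho alpha) :
  (* iota is a well-defined map Z^1 -> Aut_A(E) *)
  (forall lam, in_Z1 phi psi eta op rho lam ->
     in_AutA_E phi psi eta op rho alpha (iota_map lam)) /\
  (* iota is a group homomorphism *)
  (forall lam1 lam2, in_Z1 phi psi eta op rho lam1 ->
     in_Z1 phi psi eta op rho lam2 ->
     iota_map (fun x => lam1 x + lam2 x) = iota_map lam1 \o iota_map lam2) /\
  (* iota is injective *)
  (forall lam1 lam2, in_Z1 phi psi eta op rho lam1 ->
     in_Z1 phi psi eta op rho lam2 ->
     iota_map lam1 = iota_map lam2 -> lam1 = lam2) /\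
  (* Im(iota) = Ker(Gamma) *)
  (forall xi, in_AutA_E phi psi eta op rho alpha xi ->
     (Gamma_rel phi psi eta op rho xi id id <->
      exists lam, in_Z1 phi psi eta op rho lam /\ xi = iota_map lam)) /\
  (* Gamma is a group homomorphism *)
  (forall xi1 xi2 zeta1 zeta2 theta1 theta2,
     in_AutA_E phi psi eta op rho alpha xi1 ->
     in_AutA_E phi psi eta op rho alpha xi2 ->
     Gamma_rel phi psi eta op rho xi1 zeta1 theta1 ->
     Gamma_rel phi psi eta op rho xi2 zeta2 theta2 ->
     Gamma_rel phi psi eta op rho (xi1 \o xi2) (zeta1 \o zeta2)
       (theta1 \o theta2)) /\
  (* Im(Gamma) = Lambda_[alpha]^{-1}(0) *)
  (forall zeta theta, in_AutX op rho zeta -> in_AutA phi psi eta theta ->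
     ((exists xi, in_AutA_E phi psi eta op rho alpha xi /\
                  Gamma_rel phi psi eta op rho xi zeta theta) <->
      Lambda_zero phi psi eta op rho alpha zeta theta)).
Proof.
case: HF => [phiA [_ [psiA [etaA [phipsi [etaeta [etaphi [etapsi [phiphi [psiE phipsieta]]]]]]]]]].
have phi0 := @zh0 _ _ phiA; have psi0 := @zh0 _ _ psiA; have eta0 := @zh0 _ _ etaA.
have Z1E : forall lam, in_Z1 phi psi eta op rho lam ->
    forall x y, lam (op x y) = phi (lam x) + psi (lam y).
  move=> lam [H _] x y.
  by move: (H x y); rewrite addrAC => /eqP; rewrite subr_eq0 => /eqP ->.
have Z1I : forall lam, (forall x y, lam (op x y) = phi (lam x) + psi (lam y)) ->
    (forall z, eta (lam z) = lam (rho z)) -> in_Z1 phi psi eta op rho lam.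
  move=> lam H1 H2; split => // x y.
  by rewrite H1 opprD addrA subrr add0r addNr.
have phiN := @zhN _ _ phiA; have psiN := @zhN _ _ psiA; have etaN := @zhN _ _ etaA.
have idX : in_AutX op rho id by split; [exists id | ].
have idA : in_AutA phi psi eta id by split => //; split; [exists id | ].
split.
  move=> lam Hl; have E := Z1E _ Hl; case: Hl => _ Hr.
  split; last first.
    by exists id, id; split => //; split => //; exists lam.
  split.
    exists (iota_map (fun x => - lam x)) => -[x s]; rewrite /iota_map /=.
      by rewrite addKr.
    by rewrite addNKr.
  split.
    move=> [x a] [y b]; rewrite /iota_map /opE /=; congr pair.
    by rewrite E phiA psiA !addrA (addrAC (phi (lam x))).
  by move=> [x a]; rewrite /iota_map /rhoE /=; congr pair; rewrite etaA Hr.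
split.
  move=> l1 l2 _ _; apply: functional_extensionality => -[x s].
  by rewrite /iota_map /= addrA.
split.
  move=> l1 l2 _ _ H; apply: functional_extensionality => x.
  by have := congr1 (fun f => (f (x, 0)).2) H; rewrite /iota_map /= !addr0.
split.
  move=> xi [[_ [Hh Hr]] _]; split.
    move=> [_ [_ [lam Hl]]].
    have Exi : xi = iota_map lam.
      by apply: functional_extensionality => -[x s]; rewrite Hl.
    exists lam; split => //; apply: Z1I.
      move=> x y; move: (Hh (x, 0) (y, 0)); rewrite /opE /= !Hl /=.
      move/(congr1 snd) => /=; rewrite phi0 psi0 !addr0 add0r.
      by move/addIr.
    move=> z; move: (Hr (z, 0)); rewrite /rhoE /= !Hl /=.
    by move/(congr1 snd) => /=; rewrite eta0 !addr0.
  by move=> [lam [_ ->]]; split => //; split => //; exists lam.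
split.
  move=> xi1 xi2 z1 z2 t1 t2 _ _ [[bz1 [hz1 rz1]] [[ta1 [bt1 [tp1 [tps1 te1]]]] [l1 H1]]].
  move=> [[bz2 [hz2 rz2]] [[ta2 [bt2 [tp2 [tps2 te2]]]] [l2 H2]]].
  split.
    split; first exact: bij_comp.
    by split => * /=; rewrite ?hz2 ?hz1 ?rz2 ?rz1.
  split.
    split; first by move=> a b /=; rewrite ta2 ta1.
    split; first exact: bij_comp.
    by split => * /=; [rewrite tp2 tp1 | split => * /=; [rewrite tps2 tps1 | rewrite te2 te1]].
  by exists (fun x => l1 (z2 x) + t1 (l2 x)) => x s /=; rewrite H2 H1 ta1 addrA.
move=> zeta theta [[zinv zK zKV] [zh zr]] [tA [[tinv tK tKV] [tphi [tpsi teta]]]].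
have t0 := @zh0 _ _ tA.
have zinvr : forall x, zinv (rho x) = rho (zinv x).
  by move=> x; rewrite -{1}(zKV x) -zr zK.
have zinvh : forall x y, zinv (op x y) = op (zinv x) (zinv y).
  by move=> x y; rewrite -{1}(zKV x) -{1}(zKV y) -zh zK.
split.
  move=> [xi [[[_ [Hh Hr]] _] [_ [_ [lam Hl]]]]].
  exists zinv; split => //; split => //.
  exists (fun x => - lam (zinv x)); split.
    move=> x /=; move: (Hr (zinv x, 0)); rewrite /rhoE /= !Hl /=.
    move/(congr1 snd) => /=; rewrite eta0 t0 !addr0 => h.
    by rewrite etaN zinvr h.
  move=> x y /=; move: (Hh (zinv x, 0) (zinv y, 0)); rewrite /opE /= !Hl /=.
  move/(congr1 snd) => /=; rewrite phi0 psi0 !add0r t0 !addr0 !zKV => h.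
  rewrite zinvh phiN psiN opprK /act2.
  have -> : alpha x y = lam (op (zinv x) (zinv y)) + theta (alpha (zinv x) (zinv y))
      - (phi (lam (zinv x)) + psi (lam (zinv y))) by rewrite h addrAC subrr add0r.
  by rewrite addrAC addrK opprD addrA (addrC (lam _)).
move=> [zi [zK' [zKV' [mu [Hmu1 Hmu2]]]]].
pose lam := fun x => - mu (zeta x).
pose xi := fun p : X * A => (zeta p.1, lam p.1 + theta p.2).
have Gx : Gamma_rel phi psi eta op rho xi zeta theta.
  split; first by split; [exists zinv | split].
  split; first by split => //; split; [exists tinv | split].
  by exists lam.
exists xi; split => //; split => //; last by exists zeta, theta.
split.
  exists (fun p => (zinv p.1, tinv (p.2 - lam (zinv p.1)))) => -[x s] /=.
    by rewrite zK addrAC subrr add0r tK.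
  by rewrite /xi /= zKV tKV addrC subrK.
split.
  move=> [x a] [y b]; rewrite /xi /opE /=; congr pair; first exact: zh.
  rewrite !tA tphi tpsi phiA psiA.
  have h := Hmu2 (zeta x) (zeta y); rewrite /act2 !zK' -zh in h.
  rewrite /lam phiN psiN.
  have -> : alpha (zeta x) (zeta y) = phi (mu (zeta x)) - mu (zeta (op x y))
      + psi (mu (zeta y)) + theta (alpha x y) by rewrite -h subrK.
  by rewrite [RHS](AC ((2*2)*4) (((1*5)*(3*7))*(6*((2*4)*8)))) /= !addNr !add0r.
move=> [x a]; rewrite /xi /rhoE /=; congr pair; first exact: zr.
by rewrite etaA teta /lam zr -Hmu1 etaN.
Qed.
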